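(* Fix an integer $k\ge 1$ and a real $0<\phi<\infty$, and let $\psi = \phi/(k+\phi)$. For $n\ge k$ let $R_n\sim\mathrm{Spillage}(n,k,\phi)$ and $H_\ell = H_\ell(n) = \phi^\ell\,S(n-\ell,k,\phi)/S(n,k,\phi)$. Then for each fixed integer $\ell\ge 0$, $H_\ell\to\psi^\ell$ as $n\to\infty$. Moreover, writing $\mu_n,\sigma_n^2,\gamma_n,\kappa_n$ for the mean, variance, skewness and kurtosis of $R_n$, as $n\to\infty$, $$\mu_n\sim (n-k)(1-\psi),\qquad \sigma_n^2\sim (n-k)\psi(1-\psi),$$ $$\gamma_n\sim \frac{2(\psi-1/2)}{\sqrt{(n-k)\psi(1-\psi)}},\qquad \kappa_n\sim 3+\frac{1-6\psi(1-\psi)}{(n-k)\psi(1-\psi)}.$$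
   Context: $S(j,k)$ denotes the (central) Stirling numbers of the second kind. The noncentral Stirling numbers of the second kind are $S(n,k,\phi) = \sum_{r=0}^{n-k}\binom{n}{k+r}\phi^{n-k-r}S(k+r,k)$, with $S(n',k,\phi)=0$ for $n'<k$. The spillage distribution $\mathrm{Spillage}(n,k,\phi)$ is the distribution on $\{0,\dots,n-k\}$ with mass function $\mathrm{Spillage}(r\mid n,k,\phi) = \binom{n}{k+r}\phi^{n-k-r}S(k+r,k)/S(n,k,\phi)$. Skewness is the third central moment divided by variance$^{3/2}$; kurtosis is the fourth central moment divided by variance$^2$. $a_n\sim b_n$ means $a_n/b_n\to 1$ as $n\to\infty$. *)

(* Defs.v *)
From Stdlib Require Import Reals Lra.
From Coquelicot Require Import Coquelicot.
Open Scope R_scope.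

Fixpoint binom (n m : nat) : nat :=
  match n, m with
  | _, O => 1%nat
  | O, S _ => 0%nat
  | S n', S m' => (binom n' m' + binom n' (S m'))%nat
  end.

Fixpoint stirling2 (n k : nat) : nat :=
  match n, k with
  | O, O => 1%nat
  | O, S _ => 0%nat
  | S _, O => 0%nat
  | S n', S k' => (S k' * stirling2 n' (S k') + stirling2 n' k')%nat
  end.

Definition nc_term (n k : nat) (phi : R) (r : nat) : R :=
  INR (binom n (k + r)) * phi ^ (n - k - r) * INR (stirling2 (k + r) k).

Definition ncstirling2 (n k : nat) (phi : R) : R :=
  if Nat.ltb n k then 0 else sum_f_R0 (nc_term n k phi) (n - k).

Definition spillage_pmf (n k : nat) (phi : R) (r : nat) : R :=
  nc_term n k phi r / ncstirling2 n k phi.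

Definition spillage_E (n k : nat) (phi : R) (g : R -> R) : R :=
  sum_f_R0 (fun r => g (INR r) * spillage_pmf n k phi r) (n - k).

Definition spillage_mean (n k : nat) (phi : R) : R :=
  spillage_E n k phi (fun x => x).

Definition spillage_cmoment (j n k : nat) (phi : R) : R :=
  spillage_E n k phi (fun x => (x - spillage_mean n k phi) ^ j).

Definition spillage_var (n k : nat) (phi : R) : R := spillage_cmoment 2 n k phi.

Definition spillage_skew (n k : nat) (phi : R) : R :=
  spillage_cmoment 3 n k phi / (sqrt (spillage_var n k phi)) ^ 3.

Definition spillage_kurt (n k : nat) (phi : R) : R :=
  spillage_cmoment 4 n k phi / (spillage_var n k phi) ^ 2.

Definition Hl (k : nat) (phi : R) (l n : nat) : R :=
  phi ^ l * ncstirling2 (n - l) k phi / ncstirling2 n k phi.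

Definition asymp_eq (a b : nat -> R) : Prop :=
  is_lim_seq (fun n => a n / b n) 1.

(* Main.v *)
Require Import Defs.
From Stdlib Require Import Reals Lra Lia Arith.
From Coquelicot Require Import Coquelicot.
Open Scope R_scope.

Lemma binom_gt : forall n j, (n < j)%nat -> binom n j = 0%nat.
Proof.
  induction n; intros j H; destruct j; simpl; try lia; auto.
  rewrite IHn by lia. rewrite IHn by lia. reflexivity.
Qed.

Lemma binom_nn : forall n, binom n n = 1%nat.
Proof. induction n; simpl; auto. rewrite IHn, binom_gt; lia. Qed.

Lemma stirling2_lt : forall j k, (j < k)%nat -> stirling2 j k = 0%nat.
Proof.
  induction j; intros k H; destruct k; simpl; try lia; auto.
  rewrite !IHj by lia. lia.
Qed.

Lemma stirling2_nn : forall k, stirling2 k k = 1%nat.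
Proof. induction k; simpl; auto. rewrite IHk, stirling2_lt; lia. Qed.

Lemma binom_absorb_nat : forall n j,
  (binom (S n) j * (S n - j) = S n * binom n j)%nat.
Proof.
  induction n; intros j.
  - destruct j as [|[|j]]; simpl; lia.
  - destruct j as [|j].
    + simpl. lia.
    + destruct (le_lt_dec j n) as [Hj|Hj].
      * change (binom (S (S n)) (S j)) with (binom (S n) j + binom (S n) (S j))%nat.
        assert (Hp : binom (S n) (S j) = (binom n j + binom n (S j))%nat) by reflexivity.
        pose proof (IHn j) as H1. pose proof (IHn (S j)) as H2.
        replace (S (S n) - S j)%nat with (S (S n - S j)) by lia.
        replace (S n - j)%nat with (S (S n - S j)) in H1 by lia.
        rewrite Hp in H2 |- *. nia.
      * rewrite (binom_gt (S n) (S j)) by lia.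
        replace (S (S n) - S j)%nat with 0%nat by lia. lia.
Qed.


Fixpoint ff (x : R) (m : nat) : R :=
  match m with O => 1 | S m' => x * ff (x - 1) m' end.

Definition Qs (k : nat) (phi : R) (n m : nat) : R :=
  sum_f_R0 (fun j => ff (INR n - INR j) m * INR (binom n j) * phi ^ (n - j)
                     * INR (stirling2 j k)) n.

Lemma binom_absorb : forall n j, (j <= n)%nat ->
  INR (binom (S n) j) * (INR (S n) - INR j) = INR (S n) * INR (binom n j).
Proof.
  intros n j Hj. rewrite <- minus_INR by lia. rewrite <- !mult_INR.
  f_equal. apply binom_absorb_nat.
Qed.

Lemma Qs_S : forall k phi n m,
  Qs k phi (S n) (S m) = INR (S n) * phi * Qs k phi n m.
Proof.
  intros k phi n m. unfold Qs. rewrite tech5.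
  rewrite Rminus_diag. cbn [ff]. rewrite Rmult_0_l, !Rmult_0_l, Rplus_0_r.
  rewrite scal_sum. apply sum_eq. intros j Hj.
  cbn [ff]. replace (INR (S n) - INR j - 1) with (INR n - INR j)
    by (rewrite S_INR; ring).
  replace (S n - j)%nat with (S (n - j)) by lia. simpl pow.
  pose proof (binom_absorb n j Hj). 
  transitivity (ff (INR n - INR j) m * (INR (binom (S n) j) * (INR (S n) - INR j)) * (phi * phi ^ (n - j)) * INR (stirling2 j k)).
  ring. rewrite H. ring.
Qed.

Lemma Qs_closed : forall k phi m n,
  Qs k phi n m = ff (INR n) m * phi ^ m * Qs k phi (n - m) 0.
Proof.
  intros k phi. induction m; intros n.
  - simpl. rewrite Nat.sub_0_r. ring.
  - destruct n.
    + unfold Qs. simpl. ring.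
    + rewrite Qs_S, IHm. cbn [ff]. replace (INR (S n) - 1) with (INR n) by (rewrite S_INR; ring).
      simpl (S n - S m)%nat. simpl pow. ring.
Qed.


Lemma sum_zero : forall F N, (forall i, (i <= N)%nat -> F i = 0) -> sum_f_R0 F N = 0.
Proof.
  intros F N H. induction N. simpl. apply H; lia.
  rewrite tech5, IHN. rewrite H by lia. ring. intros; apply H; lia.
Qed.

Lemma sum_shift : forall F k n, (k <= n)%nat -> (forall j, (j < k)%nat -> F j = 0) ->
  sum_f_R0 F n = sum_f_R0 (fun r => F (k + r)%nat) (n - k).
Proof.
  intros F k n Hk H. destruct k.
  - rewrite Nat.sub_0_r. apply sum_eq. intros; reflexivity.
  - rewrite (tech2 F k n) by lia. rewrite sum_zero. rewrite Rplus_0_l. reflexivity.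
    intros; apply H; lia.
Qed.

Definition bt (k : nat) (phi : R) (n j : nat) : R :=
  INR (binom n j) * phi ^ (n - j) * INR (stirling2 j k).

Lemma nc_Q : forall n k phi, ncstirling2 n k phi = Qs k phi n 0.
Proof.
  intros n k phi. unfold ncstirling2, Qs.
  destruct (Nat.ltb_spec n k).
  - symmetry. apply sum_zero. intros i Hi. rewrite stirling2_lt by lia. simpl; ring.
  - rewrite (sum_shift _ k n) by (auto; intros j Hj; rewrite stirling2_lt by lia; simpl; ring).
    apply sum_eq. intros i Hi. unfold nc_term. simpl ff.
    replace (n - (k + i))%nat with (n - k - i)%nat by lia. ring.
Qed.

Lemma mom_Q : forall n k phi m, (k <= n)%nat ->
  sum_f_R0 (fun r => ff (INR (n - k) - INR r) m * nc_term n k phi r) (n - k)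
  = Qs k phi n m.
Proof.
  intros n k phi m Hk. unfold Qs.
  rewrite (sum_shift _ k n) by (auto; intros j Hj; rewrite stirling2_lt by lia; simpl; ring).
  apply sum_eq. intros i Hi. unfold nc_term.
  replace (n - (k + i))%nat with (n - k - i)%nat by lia.
  replace (INR n - INR (k + i)) with (INR (n - k) - INR i)
    by (rewrite minus_INR, plus_INR by lia; ring).
  ring.
Qed.

Lemma Q_ext : forall k phi n M, (n <= M)%nat ->
  Qs k phi n 0 = sum_f_R0 (bt k phi n) M.
Proof.
  intros k phi n M H. induction M.
  - assert (n = 0%nat) by lia. subst. unfold Qs, bt. simpl. ring.
  - destruct (Nat.eq_dec n (S M)).
    + subst. unfold Qs, bt. apply sum_eq. intros; simpl; ring.
    + rewrite tech5, <- IHM by lia. unfold bt. rewrite binom_gt by lia. simpl; ring.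
Qed.

Lemma Q_rec : forall k phi n,
  Qs k phi (S n) 0 = phi * Qs k phi n 0 +
    sum_f_R0 (fun i => INR (binom n i) * phi ^ (n - i) * INR (stirling2 (S i) k)) n.
Proof.
  intros k phi n. rewrite (Q_ext k phi (S n) (S n)), (Q_ext k phi n (S n)) by lia.
  rewrite !(decomp_sum _ (S n)) by lia. simpl pred.
  transitivity (bt k phi (S n) 0 + sum_f_R0 (fun i => INR (binom n i) * phi ^ (n - i) * INR (stirling2 (S i) k)
     + INR (binom n (S i)) * phi ^ (n - i) * INR (stirling2 (S i) k)) n).
  { f_equal. apply sum_eq. intros i Hi. unfold bt.
    change (binom (S n) (S i)) with (binom n i + binom n (S i))%nat.
    rewrite plus_INR. simpl (S n - S i)%nat. ring. }
  rewrite plus_sum.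
  assert (E : sum_f_R0 (fun i => INR (binom n (S i)) * phi ^ (n - i) * INR (stirling2 (S i) k)) n
    = phi * sum_f_R0 (fun i => bt k phi n (S i)) n).
  { rewrite scal_sum. apply sum_eq. intros i Hi. unfold bt.
    destruct (Nat.eq_dec i n).
    - subst. rewrite binom_gt by lia. simpl; ring.
    - replace (n - i)%nat with (S (n - S i)) by lia. simpl; ring. }
  rewrite E. replace (bt k phi (S n) 0) with (phi * bt k phi n 0). ring. unfold bt; rewrite !Nat.sub_0_r; simpl binom; simpl pow. replace (binom n 0) with 1%nat by (destruct n; reflexivity). simpl; ring.
Qed.

Lemma G_rec0 : forall phi n, Qs 0 phi (S n) 0 = phi * Qs 0 phi n 0.
Proof.
  intros. rewrite Q_rec. rewrite sum_zero. ring. intros; simpl; ring.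
Qed.

Lemma G_recS : forall k phi n, Qs (S k) phi (S n) 0 =
   (INR (S k) + phi) * Qs (S k) phi n 0 + Qs k phi n 0.
Proof.
  intros. rewrite Q_rec. rewrite (Q_ext (S k) phi n n), (Q_ext k phi n n) by lia.
  unfold bt. rewrite Rmult_plus_distr_r, scal_sum, scal_sum.
  replace (sum_f_R0 (fun i => INR (binom n i) * phi ^ (n - i) * INR (stirling2 i k)) n)
    with (sum_f_R0 (fun i => INR (binom n i) * phi ^ (n - i) * INR (stirling2 i k) * 1) n)
    by (apply sum_eq; intros; ring).
  rewrite <- !plus_sum. apply sum_eq. intros i Hi.
  change (stirling2 (S i) (S k)) with (S k * stirling2 i (S k) + stirling2 i k)%nat.
  rewrite plus_INR, mult_INR. ring.
Qed.

Lemma G_00 : forall phi, Qs 0 phi 0 0 = 1.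
Proof. intros. unfold Qs. simpl. ring. Qed.
Lemma G_0S : forall k phi, Qs (S k) phi 0 0 = 0.
Proof. intros. unfold Qs. simpl. ring. Qed.
Lemma G_kk : forall k phi, Qs k phi k 0 = 1.
Proof.
  intros. rewrite <- nc_Q. unfold ncstirling2. rewrite Nat.ltb_irrefl, Nat.sub_diag.
  simpl. unfold nc_term. rewrite Nat.add_0_r, binom_nn, stirling2_nn, Nat.sub_diag. simpl; ring.
Qed.
Lemma G_nonneg : forall k phi n, 0 <= phi -> 0 <= Qs k phi n 0.
Proof.
  intros. unfold Qs. apply cond_pos_sum. intros j. simpl.
  repeat apply Rmult_le_pos; try apply pos_INR; try lra. apply pow_le; lra.
Qed.


Lemma G0_eq : forall phi n, Qs 0 phi n 0 = phi ^ n.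
Proof. intros. induction n. apply G_00. rewrite G_rec0, IHn. simpl; ring. Qed.

Lemma G_up_aux : forall phi, 0 < phi -> forall n k,
  Qs (S k) phi n 0 <= (INR (S k) + phi) ^ n - (INR k + phi) ^ n.
Proof.
  intros phi Hphi. induction n; intros k.
  - rewrite G_0S. simpl; lra.
  - rewrite G_recS.
    assert (H1 : Qs k phi n 0 <= (INR k + phi) ^ n).
    { destruct k. rewrite G0_eq. replace (INR 0 + phi) with phi by (simpl; ring); lra.
      pose proof (IHn k). assert (0 <= (INR k + phi) ^ n) by (apply pow_le; pose proof (pos_INR k); lra). lra. }
    pose proof (IHn k).
    assert (0 < INR (S k) + phi) by (pose proof (pos_INR (S k)); lra).
    rewrite S_INR in *. simpl pow.
    nra.
Qed.

Lemma G_up : forall phi, 0 < phi -> forall n k, Qs k phi n 0 <= (INR k + phi) ^ n.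
Proof.
  intros phi Hphi n k. destruct k. rewrite G0_eq. replace (INR 0 + phi) with phi by (simpl; ring); lra.
  pose proof (G_up_aux phi Hphi n k).
  assert (0 <= (INR k + phi) ^ n) by (apply pow_le; pose proof (pos_INR k); lra). lra.
Qed.

Lemma G_D : forall phi, 0 < phi -> forall k m i,
  0 <= Qs (S k) phi (m + i) 0 - (INR (S k) + phi) ^ i * Qs (S k) phi m 0 <=
  INR i * (INR (S k) + phi) ^ i * (INR k + phi) ^ m.
Proof.
  intros phi Hphi k m. induction i.
  - rewrite Nat.add_0_r. simpl; lra.
  - rewrite Nat.add_succ_r, G_recS.
    set (K := INR (S k) + phi) in *. set (K' := INR k + phi).
    assert (HK1 : 1 <= K) by (unfold K; rewrite S_INR; pose proof (pos_INR k); lra).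
    assert (HK' : 0 <= K') by (unfold K'; pose proof (pos_INR k); lra).
    assert (HKK : K' <= K) by (unfold K, K'; rewrite S_INR; lra).
    pose proof (G_nonneg k phi (m + i) (Rlt_le _ _ Hphi)).
    pose proof (G_up phi Hphi (m + i) k). fold K' in H0.
    assert (Hp : K' ^ (m + i) <= K' ^ m * K ^ (S i)).
    { rewrite pow_add. apply Rmult_le_compat_l. apply pow_le; lra.
      apply Rle_trans with (K ^ i). apply pow_incr; lra.
      simpl. pose proof (pow_le K i). nra. }
    assert (0 <= K' ^ m) by (apply pow_le; lra).
    assert (0 <= K ^ i) by (apply pow_le; lra).
    rewrite S_INR. simpl pow. destruct IHi as [I1 I2].
    split. nra.
    assert (HKm := Rmult_le_compat_l K _ _ ltac:(lra) I2). fold K' in HKm. simpl pow in Hp. nra.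
Qed.

Lemma G_low : forall phi, 0 < phi -> forall k n, (S k <= n)%nat ->
  (INR (S k) + phi) ^ (n - S k) <= Qs (S k) phi n 0.
Proof.
  intros phi Hphi k n Hn. pose proof (G_D phi Hphi k (S k) (n - S k)) as [H _].
  rewrite G_kk in H. replace (S k + (n - S k))%nat with n in H by lia. lra.
Qed.


Lemma n_geom : forall r, 0 <= r < 1 -> is_lim_seq (fun n => INR n * r ^ n) 0.
Proof.
  intros r [Hr0 Hr1].
  set (t := (1 + r) / 2). set (s := sqrt t).
  assert (Ht : 0 < t < 1) by (unfold t; lra).
  assert (Hs2 : s * s = t) by (unfold s; apply sqrt_sqrt; lra).
  assert (Hs : 0 < s < 1).
  { unfold s. split. apply sqrt_lt_R0; lra.
    rewrite <- sqrt_1. apply sqrt_lt_1_alt; lra. }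
  set (d := / s - 1).
  assert (Hd : 0 < d).
  { unfold d. assert (1 < / s). { rewrite <- Rinv_1. apply Rinv_lt_contravar; lra. } lra. }
  assert (Hsd : s * (1 + d) = 1) by (unfold d; field; lra).
  apply is_lim_seq_le_le with (u := fun _ => 0) (w := fun n => s ^ n / d).
  - intros n. split. apply Rmult_le_pos. apply pos_INR. apply pow_le; lra.
    assert (B1 : 1 + INR n * d <= (1 + d) ^ n) by (apply Rle_pow_lin; lra).
    assert (B2 : s ^ n * (1 + d) ^ n = 1) by (rewrite <- Rpow_mult_distr, Hsd; apply pow1).
    assert (B3 : r ^ n <= t ^ n) by (apply pow_incr; unfold t; lra).
    assert (B4 : t ^ n = s ^ n * s ^ n) by (rewrite <- Rpow_mult_distr, Hs2; reflexivity).
    assert (0 <= s ^ n) by (apply pow_le; lra).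
    assert (INR n * s ^ n * d <= 1) by nra.
    assert (INR n * s ^ n <= / d).
    { apply Rmult_le_reg_r with d. lra. rewrite Rinv_l by lra. lra. }
    unfold Rdiv. rewrite B4 in B3.
    apply Rle_trans with (INR n * (s ^ n * s ^ n)).
    apply Rmult_le_compat_l. apply pos_INR. lra.
    assert (0 <= INR n) by apply pos_INR. nra.
  - apply is_lim_seq_const.
  - replace (Finite 0) with (Rbar_mult 0 (/ d)) by (simpl; f_equal; ring).
    apply is_lim_seq_scal_r. apply is_lim_seq_geom. rewrite Rabs_pos_eq; lra.
Qed.

Lemma n2_geom : forall r, 0 <= r < 1 -> is_lim_seq (fun n => INR n ^ 2 * r ^ n) 0.
Proof.
  intros r Hr. set (s := sqrt r).
  assert (Hs : 0 <= s < 1).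
  { unfold s. split. apply sqrt_pos. rewrite <- sqrt_1.
    destruct (Req_dec r 0). subst. rewrite sqrt_0, sqrt_1. lra. apply sqrt_lt_1_alt; lra. }
  pose proof (n_geom s Hs) as H.
  apply is_lim_seq_ext with (fun n => (INR n * s ^ n) * (INR n * s ^ n)).
  { intros n. assert (s * s = r) by (unfold s; apply sqrt_sqrt; lra).
    rewrite <- H0. rewrite Rpow_mult_distr. ring. }
  replace (Finite 0) with (Finite (0 * 0)) by (f_equal; ring).
  apply is_lim_seq_mult'; auto.
Qed.

Lemma lim_scal : forall u (c l : R), is_lim_seq u l -> is_lim_seq (fun n => c * u n) (c * l).
Proof. intros. apply is_lim_seq_mult'. apply is_lim_seq_const. auto. Qed.

Lemma shift_geom : forall r, 0 <= r < 1 -> forall (i : nat) C,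
  is_lim_seq (fun n => C * (INR n ^ 2 * r ^ (n - i))) 0.
Proof.
  intros r Hr i C. apply (is_lim_seq_incr_n _ i).
  apply is_lim_seq_ext with
    (fun n => C * (INR n ^ 2 * r ^ n) + (2 * C * INR i) * (INR n * r ^ n) + (C * INR i ^ 2) * r ^ n).
  { intros n. replace (n + i - i)%nat with n by lia. rewrite plus_INR. ring. }
  replace 0 with (C * 0 + (2 * C * INR i) * 0 + (C * INR i ^ 2) * 0) by ring.
  apply is_lim_seq_plus'. apply is_lim_seq_plus'.
  apply lim_scal. apply n2_geom; auto.
  apply lim_scal. apply n_geom; auto.
  apply lim_scal. apply is_lim_seq_geom. rewrite Rabs_pos_eq; lra.
Qed.


Lemma Hl_bound : forall k phi, 0 < phi -> forall i n, (S k + i <= n)%nat ->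
  Rabs (Hl (S k) phi i n - (phi / (INR (S k) + phi)) ^ i) <=
  INR i * (phi / (INR (S k) + phi)) ^ i * (INR (S k) + phi) ^ (S k) *
  ((INR k + phi) / (INR (S k) + phi)) ^ (n - i).
Proof.
  intros k phi Hphi i n Hn. unfold Hl. rewrite !nc_Q.
  set (K := INR (S k) + phi). set (K' := INR k + phi).
  assert (HK1 : 1 <= K) by (unfold K; rewrite S_INR; pose proof (pos_INR k); lra).
  assert (HK' : 0 <= K') by (unfold K'; pose proof (pos_INR k); lra).
  set (m := (n - i)%nat).
  pose proof (G_D phi Hphi k m i) as [D1 D2].
  replace (m + i)%nat with n in D1, D2 by (unfold m; lia).
  fold K K' in D1, D2.
  set (g := Qs (S k) phi n 0) in *. set (g0 := Qs (S k) phi m 0) in *.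
  set (P := K ^ (n - S k)).
  assert (HP : P <= g) by (apply G_low; auto; lia).
  assert (HP0 : 0 < P) by (apply pow_lt; lra).
  assert (HKP : K ^ S k * P = K ^ m * K ^ i) by (unfold P; rewrite <- !pow_add; f_equal; unfold m; lia).
  assert (HKi : 0 < K ^ i) by (apply pow_lt; lra).
  assert (HKm : 0 < K ^ m) by (apply pow_lt; lra).
  assert (Hphii : 0 < phi ^ i) by (apply pow_lt; lra).
  unfold Rdiv. rewrite !Rpow_mult_distr, !pow_inv.
  replace (phi ^ i * g0 * / g - phi ^ i * / K ^ i) with (- (phi ^ i * (g - K ^ i * g0) / (g * K ^ i)))
    by (field; lra).
  rewrite Rabs_Ropp, Rabs_pos_eq.
  2: { apply Rmult_le_pos. apply Rmult_le_pos; lra. left; apply Rinv_0_lt_compat. nra. }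
  apply Rle_trans with (phi ^ i * (INR i * K ^ i * K' ^ m) / (P * K ^ i)).
  - unfold Rdiv. apply Rmult_le_compat.
    + apply Rmult_le_pos; lra.
    + left; apply Rinv_0_lt_compat. nra.
    + apply Rmult_le_compat_l; lra.
    + apply Rinv_le_contravar. nra. apply Rmult_le_compat_r; lra.
  - right. replace (K ^ i) with (K ^ S k * P / K ^ m) at 1 by (rewrite HKP; field; lra).
    field. repeat split; try lra.
Qed.

Lemma Hl_lims : forall k phi, 0 < phi -> forall i,
  is_lim_seq (fun n => Hl (S k) phi i n) ((phi / (INR (S k) + phi)) ^ i) /\
  is_lim_seq (fun n => INR n ^ 2 * (Hl (S k) phi i n - (phi / (INR (S k) + phi)) ^ i)) 0.
Proof.
  intros k phi Hphi i.
  set (K := INR (S k) + phi). set (K' := INR k + phi).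
  assert (HK1 : 1 <= K) by (unfold K; rewrite S_INR; pose proof (pos_INR k); lra).
  assert (HK' : 0 <= K') by (unfold K'; pose proof (pos_INR k); lra).
  assert (Hth : 0 <= K' / K < 1).
  { split. apply Rmult_le_pos; auto. left; apply Rinv_0_lt_compat; lra.
    apply Rmult_lt_reg_r with K. lra. unfold Rdiv. rewrite Rmult_assoc, Rinv_l by lra.
    unfold K, K'. rewrite S_INR. lra. }
  set (C := INR i * (phi / K) ^ i * K ^ (S k)).
  assert (HB : forall n, (S k + i <= n)%nat -> Rabs (Hl (S k) phi i n - (phi / K) ^ i) <= C * (K' / K) ^ (n - i))
    by (intros; apply Hl_bound; auto).
  assert (HC : 0 <= C).
  { unfold C. apply Rmult_le_pos. apply Rmult_le_pos. apply pos_INR. apply pow_le.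
    apply Rmult_le_pos; try lra. left; apply Rinv_0_lt_compat; lra. apply pow_le; lra. }
  split.
  - apply is_lim_seq_ext with (fun n => (Hl (S k) phi i n - (phi / K) ^ i) + (phi / K) ^ i).
    intros; ring.
    replace (Finite ((phi / K) ^ i)) with (Finite (0 + (phi / K) ^ i)) by (f_equal; ring).
    apply is_lim_seq_plus'. 2: apply is_lim_seq_const.
    apply is_lim_seq_abs_0.
    apply is_lim_seq_le_le_loc with (fun _ => 0) (fun n => C * (INR n ^ 2 * (K' / K) ^ (n - i))).
    + exists (S (S k + i)). intros n Hn. split. apply Rabs_pos.
      eapply Rle_trans. apply HB. lia.
      apply Rmult_le_compat_l; auto.
      assert (1 <= INR n ^ 2).
      { assert (1 <= INR n) by (apply (le_INR 1); lia). nra. }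
      assert (0 <= (K' / K) ^ (n - i)) by (apply pow_le; lra). nra.
    + apply is_lim_seq_const.
    + apply shift_geom; auto.
  - apply is_lim_seq_abs_0.
    apply is_lim_seq_le_le_loc with (fun _ => 0) (fun n => C * (INR n ^ 2 * (K' / K) ^ (n - i))).
    + exists (S k + i)%nat. intros n Hn. split. apply Rabs_pos.
      rewrite Rabs_mult. rewrite (Rabs_pos_eq (INR n ^ 2)) by (apply pow_le; apply pos_INR).
      rewrite (Rmult_comm (INR n ^ 2)).
      replace (C * (INR n ^ 2 * (K' / K) ^ (n - i))) with ((C * (K' / K) ^ (n - i)) * INR n ^ 2) by ring.
      apply Rmult_le_compat_r. apply pow_le; apply pos_INR. apply HB; lia.
    + apply is_lim_seq_const.
    + apply shift_geom; auto.
Qed.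


Lemma G_pos : forall k phi n, 0 < phi -> (S k <= n)%nat -> 0 < ncstirling2 n (S k) phi.
Proof.
  intros. rewrite nc_Q. eapply Rlt_le_trans. 2: apply G_low; auto.
  apply pow_lt. pose proof (pos_INR (S k)); lra.
Qed.

Lemma Fm_eq : forall k phi n m, 0 < phi -> (S k <= n)%nat ->
  sum_f_R0 (fun r => ff (INR (n - S k) - INR r) m * spillage_pmf n (S k) phi r) (n - S k)
  = ff (INR n) m * Hl (S k) phi m n.
Proof.
  intros k phi n m Hphi Hn. pose proof (G_pos k phi n Hphi Hn) as HG.
  unfold spillage_pmf, Hl.
  transitivity (/ ncstirling2 n (S k) phi * sum_f_R0 (fun r => ff (INR (n - S k) - INR r) m * nc_term n (S k) phi r) (n - S k)).
  { rewrite scal_sum. apply sum_eq. intros; unfold Rdiv; ring. }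
  rewrite mom_Q by lia. rewrite Qs_closed. rewrite <- nc_Q. field. lra.
Qed.

Lemma sum_lin : forall (f g : nat -> R) a N,
  sum_f_R0 (fun r => a * f r + g r) N = a * sum_f_R0 f N + sum_f_R0 g N.
Proof. intros. rewrite plus_sum, scal_sum. f_equal. apply sum_eq; intros; ring. Qed.

Lemma lin5 : forall (w x : nat -> R) c0 c1 c2 c3 c4 N,
  sum_f_R0 (fun r => (c0 + c1 * ff (x r) 1 + c2 * ff (x r) 2 + c3 * ff (x r) 3 + c4 * ff (x r) 4) * w r) N
  = c0 * sum_f_R0 (fun r => ff (x r) 0 * w r) N + c1 * sum_f_R0 (fun r => ff (x r) 1 * w r) N
  + c2 * sum_f_R0 (fun r => ff (x r) 2 * w r) N + c3 * sum_f_R0 (fun r => ff (x r) 3 * w r) N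
  + c4 * sum_f_R0 (fun r => ff (x r) 4 * w r) N.
Proof.
  intros. 
  transitivity (sum_f_R0 (fun r => c0 * (ff (x r) 0 * w r) + (c1 * (ff (x r) 1 * w r) + (c2 * (ff (x r) 2 * w r) + (c3 * (ff (x r) 3 * w r) + (c4 * (ff (x r) 4 * w r) + 0))))) N).
  { apply sum_eq; intros. simpl ff. ring. }
  rewrite !sum_lin. rewrite (sum_zero (fun _ => 0)) by (intros; reflexivity). ring.
Qed.

Section Mom.
Variables (k : nat) (phi : R) (n : nat).
Hypothesis Hphi : 0 < phi.
Hypothesis Hn : (S k <= n)%nat.

Let w := spillage_pmf n (S k) phi.
Let x := fun r => INR (n - S k) - INR r.
Let Fv (m : nat) := ff (INR n) m * Hl (S k) phi m n.

Lemma F_eq : forall m, sum_f_R0 (fun r => ff (x r) m * w r) (n - S k) = Fv m.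
Proof. intros. apply Fm_eq; auto. Qed.

Lemma F0_eq : Fv 0 = 1.
Proof. unfold Fv, Hl. simpl. rewrite Nat.sub_0_r. pose proof (G_pos k phi n Hphi Hn). field. lra. Qed.

Lemma mean_eq : spillage_mean n (S k) phi = INR (n - S k) - Fv 1.
Proof.
  unfold spillage_mean, spillage_E. fold w.
  transitivity (sum_f_R0 (fun r => (INR (n - S k) + (-1) * ff (x r) 1 + 0 * ff (x r) 2 + 0 * ff (x r) 3 + 0 * ff (x r) 4) * w r) (n - S k)).
  { apply sum_eq; intros. unfold x. simpl ff. ring. }
  rewrite lin5, !F_eq, F0_eq. ring.
Qed.

Lemma cm_eq : forall j, spillage_cmoment j n (S k) phi =
  sum_f_R0 (fun r => (Fv 1 - x r) ^ j * w r) (n - S k).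
Proof.
  intros. unfold spillage_cmoment, spillage_E. rewrite mean_eq. fold w.
  apply sum_eq; intros. unfold x. f_equal. f_equal. ring.
Qed.

Lemma var_eq : spillage_var n (S k) phi = Fv 1 ^ 2 + (1 - 2 * Fv 1) * Fv 1 + Fv 2.
Proof.
  unfold spillage_var. rewrite cm_eq. set (v := Fv 1).
  transitivity (sum_f_R0 (fun r => (v ^ 2 + (1 - 2 * v) * ff (x r) 1 + 1 * ff (x r) 2 + 0 * ff (x r) 3 + 0 * ff (x r) 4) * w r) (n - S k)).
  { apply sum_eq; intros. simpl ff. ring. }
  rewrite lin5, !F_eq, F0_eq. unfold v. ring.
Qed.

Lemma cm3_eq : spillage_cmoment 3 n (S k) phi =
  Fv 1 ^ 3 + (-3 * Fv 1 ^ 2 + 3 * Fv 1 - 1) * Fv 1 + (3 * Fv 1 - 3) * Fv 2 - Fv 3.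
Proof.
  rewrite cm_eq. set (v := Fv 1).
  transitivity (sum_f_R0 (fun r => (v ^ 3 + (-3 * v ^ 2 + 3 * v - 1) * ff (x r) 1 + (3 * v - 3) * ff (x r) 2 + (-1) * ff (x r) 3 + 0 * ff (x r) 4) * w r) (n - S k)).
  { apply sum_eq; intros. simpl ff. ring. }
  rewrite lin5, !F_eq, F0_eq. unfold v. ring.
Qed.

Lemma cm4_eq : spillage_cmoment 4 n (S k) phi =
  Fv 1 ^ 4 + (-4 * Fv 1 ^ 3 + 6 * Fv 1 ^ 2 - 4 * Fv 1 + 1) * Fv 1
  + (6 * Fv 1 ^ 2 - 12 * Fv 1 + 7) * Fv 2 + (-4 * Fv 1 + 6) * Fv 3 + Fv 4.
Proof.
  rewrite cm_eq. set (v := Fv 1).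
  transitivity (sum_f_R0 (fun r => (v ^ 4 + (-4 * v ^ 3 + 6 * v ^ 2 - 4 * v + 1) * ff (x r) 1 + (6 * v ^ 2 - 12 * v + 7) * ff (x r) 2 + (-4 * v + 6) * ff (x r) 3 + 1 * ff (x r) 4) * w r) (n - S k)).
  { apply sum_eq; intros. simpl ff. ring. }
  rewrite lin5, !F_eq, F0_eq. unfold v. ring.
Qed.

End Mom.


Lemma lim_eq : forall u (a b : R), is_lim_seq u a -> a = b -> is_lim_seq u b.
Proof. intros; subst; auto. Qed.
Lemma lim_opp : forall u (l : R), is_lim_seq u l -> is_lim_seq (fun n => - u n) (- l).
Proof. intros. apply is_lim_seq_ext with (fun n => 0 - u n). intros; ring.
  replace (- l) with (0 - l) by ring. apply is_lim_seq_minus'. apply is_lim_seq_const. auto. Qed.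
Lemma lim_pow : forall u (l : R) m, is_lim_seq u l -> is_lim_seq (fun n => u n ^ m) (l ^ m).
Proof. intros u l m H. induction m. apply is_lim_seq_const.
  apply is_lim_seq_mult'; auto. Qed.
Lemma lim_sqrt : forall u (l : R), 0 <= l -> is_lim_seq u l -> is_lim_seq (fun n => sqrt (u n)) (sqrt l).
Proof. intros. apply is_lim_seq_continuous. apply continuity_pt_sqrt; auto. auto. Qed.

Ltac lim_tac :=
  lazymatch goal with
  | |- is_lim_seq (fun _ => ?c) _ => apply is_lim_seq_const
  | |- is_lim_seq (fun n => _ + _) _ => apply is_lim_seq_plus'; lim_tac
  | |- is_lim_seq (fun n => _ - _) _ => apply is_lim_seq_minus'; lim_tac
  | |- is_lim_seq (fun n => _ * _) _ => apply is_lim_seq_mult'; lim_tac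
  | |- is_lim_seq (fun n => _ / _) _ => apply is_lim_seq_div'; [lim_tac | lim_tac | ]
  | |- is_lim_seq (fun n => - _) _ => apply lim_opp; lim_tac
  | |- is_lim_seq (fun n => _ ^ _) _ => apply lim_pow; lim_tac
  | |- is_lim_seq (fun n => sqrt _) _ => apply lim_sqrt; [ | lim_tac]
  | |- _ => eassumption
  end.

Lemma ev_pos : forall f (l : R), is_lim_seq f l -> 0 < l -> eventually (fun n => 0 < f n).
Proof.
  intros f l H Hl. apply is_lim_seq_spec in H. destruct (H (mkposreal _ Hl)) as [N HN].
  exists N. intros n Hn. specialize (HN n Hn). simpl in HN.
  apply Rabs_lt_between in HN. lra.
Qed.

Lemma lim_u : is_lim_seq (fun n => / INR n) 0.
Proof.
  replace (Finite 0) with (Rbar_inv p_infty) by reflexivity.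
  apply is_lim_seq_inv. apply is_lim_seq_INR. discriminate.
Qed.


Definition Vpoly (u p E1 E2 E3 E4 : R) : R := (- u ^ 3 * E1 ^ 2 - u ^ 2 * E2 ^ 1 + u ^ 2 * E1 ^ 1 + u ^ 1 * E2 ^ 1 - 2 * u ^ 1 * p ^ 1 * E1 ^ 1 + p ^ 1 - p ^ 2).
Definition M3poly (u p E1 E2 E3 E4 : R) : R := (- 2 * u ^ 4 * E1 ^ 3 - 3 * u ^ 3 * E1 ^ 1 * E2 ^ 1 + 3 * u ^ 3 * E1 ^ 2 - 2 * u ^ 2 * E3 ^ 1 + 3 * u ^ 2 * E2 ^ 1 - u ^ 2 * E1 ^ 1 + 3 * u ^ 2 * E1 ^ 1 * E2 ^ 1 - 6 * u ^ 2 * p ^ 1 * E1 ^ 2 + 3 * u ^ 1 * E3 ^ 1 - 3 * u ^ 1 * E2 ^ 1 - 3 * u ^ 1 * p ^ 1 * E2 ^ 1 + 6 * u ^ 1 * p ^ 1 * E1 ^ 1 - 3 * u ^ 1 * p ^ 2 * E1 ^ 1 - E3 ^ 1 - p ^ 1 + 3 * p ^ 1 * E2 ^ 1 + 3 * p ^ 2 - 3 * p ^ 2 * E1 ^ 1 - 2 * p ^ 3).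
Definition K4poly (u p E1 E2 E3 E4 : R) : R := (- 3 * u ^ 6 * E1 ^ 4 - 6 * u ^ 5 * E1 ^ 2 * E2 ^ 1 + 6 * u ^ 5 * E1 ^ 3 - 8 * u ^ 4 * E1 ^ 1 * E3 ^ 1 + 12 * u ^ 4 * E1 ^ 1 * E2 ^ 1 - 4 * u ^ 4 * E1 ^ 2 + 6 * u ^ 4 * E1 ^ 2 * E2 ^ 1 - 12 * u ^ 4 * p ^ 1 * E1 ^ 3 - 6 * u ^ 3 * E4 ^ 1 + 12 * u ^ 3 * E3 ^ 1 - 7 * u ^ 3 * E2 ^ 1 + u ^ 3 * E1 ^ 1 + 12 * u ^ 3 * E1 ^ 1 * E3 ^ 1 - 12 * u ^ 3 * E1 ^ 1 * E2 ^ 1 - 12 * u ^ 3 * p ^ 1 * E1 ^ 1 * E2 ^ 1 + 18 * u ^ 3 * p ^ 1 * E1 ^ 2 - 6 * u ^ 3 * p ^ 2 * E1 ^ 2 + 11 * u ^ 2 * E4 ^ 1 - 18 * u ^ 2 * E3 ^ 1 + 7 * u ^ 2 * E2 ^ 1 - 4 * u ^ 2 * E1 ^ 1 * E3 ^ 1 - 8 * u ^ 2 * p ^ 1 * E3 ^ 1 + 12 * u ^ 2 * p ^ 1 * E2 ^ 1 - 8 * u ^ 2 * p ^ 1 * E1 ^ 1 + 12 * u ^ 2 * p ^ 1 * E1 ^ 1 * E2 ^ 1 + 12 * u ^ 2 * p ^ 2 * E1 ^ 1 - 12 * u ^ 2 * p ^ 2 * E1 ^ 2 - 8 * u ^ 2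 * p ^ 3 * E1 ^ 1 - 6 * u ^ 1 * E4 ^ 1 + 6 * u ^ 1 * E3 ^ 1 + u ^ 1 * p ^ 1 + 12 * u ^ 1 * p ^ 1 * E3 ^ 1 - 12 * u ^ 1 * p ^ 1 * E2 ^ 1 - 7 * u ^ 1 * p ^ 2 - 6 * u ^ 1 * p ^ 2 * E2 ^ 1 + 6 * u ^ 1 * p ^ 2 * E1 ^ 1 + 12 * u ^ 1 * p ^ 3 - 6 * u ^ 1 * p ^ 4 + E4 ^ 1 - 4 * p ^ 1 * E3 ^ 1 + 3 * p ^ 2 + 6 * p ^ 2 * E2 ^ 1 - 6 * p ^ 3 - 4 * p ^ 3 * E1 ^ 1 + 3 * p ^ 4).

Definition Eseq (k : nat) (phi : R) (i n : nat) : R :=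
  INR n ^ 2 * (Hl (S k) phi i n - (phi / (INR (S k) + phi)) ^ i).

Section Ids.
Variables (k : nat) (phi : R) (n : nat).
Hypothesis Hphi : 0 < phi.
Hypothesis Hn : (S k <= n)%nat.
Let p := phi / (INR (S k) + phi).
Let u := / INR n.
Let e i := Eseq k phi i n.

Lemma N_pos : 0 < INR n.
Proof. apply lt_0_INR. lia. Qed.

Lemma var_id : spillage_var n (S k) phi = INR n * Vpoly u p (e 1) (e 2) (e 3) (e 4).
Proof.
  pose proof N_pos. rewrite var_eq by auto. unfold Vpoly, u, e, Eseq. fold p. cbn [ff].
  field. lra.
Qed.

Lemma cm3_id : spillage_cmoment 3 n (S k) phi = INR n * M3poly u p (e 1) (e 2) (e 3) (e 4).
Proof.
  pose proof N_pos. rewrite cm3_eq by auto. unfold M3poly, u, e, Eseq. fold p. cbn [ff].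
  field. lra.
Qed.

Lemma cm4_id : spillage_cmoment 4 n (S k) phi = INR n ^ 2 * K4poly u p (e 1) (e 2) (e 3) (e 4).
Proof.
  pose proof N_pos. rewrite cm4_eq by auto. unfold K4poly, u, e, Eseq. fold p. cbn [ff].
  field. lra.
Qed.

Lemma mean_id : spillage_mean n (S k) phi = INR n * ((1 - INR (S k) * u) - p - u ^ 2 * e 1).
Proof.
  pose proof N_pos. rewrite mean_eq by auto. unfold u, e, Eseq. fold p. cbn [ff].
  rewrite minus_INR by lia. field. lra.
Qed.
End Ids.


Theorem theorem3 (k : nat) (phi : R) (hk : (1 <= k)%nat) (hphi : 0 < phi) :
  let psi := phi / (INR k + phi) in
  (forall l : nat, is_lim_seq (fun n => Hl k phi l n) (psi ^ l)) /\
  asymp_eq (fun n => spillage_mean n k phi)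
           (fun n => INR (n - k) * (1 - psi)) /\
  asymp_eq (fun n => spillage_var n k phi)
           (fun n => INR (n - k) * psi * (1 - psi)) /\
  (psi <> 1 / 2 ->
   asymp_eq (fun n => spillage_skew n k phi)
            (fun n => 2 * (psi - 1 / 2) / sqrt (INR (n - k) * psi * (1 - psi)))) /\
  asymp_eq (fun n => spillage_kurt n k phi)
           (fun n => 3 + (1 - 6 * psi * (1 - psi)) / (INR (n - k) * psi * (1 - psi))).
Proof.
  intros psi. destruct k as [|k]; [lia|]. clear hk.
  assert (HK : 0 < INR (S k) + phi) by (pose proof (pos_INR (S k)); lra).
  assert (Hp : 0 < psi < 1).
  { unfold psi. split. apply Rdiv_lt_0_compat; lra.
    apply Rmult_lt_reg_r with (INR (S k) + phi). lra. unfold Rdiv. rewrite Rmult_assoc, Rinv_l by lra.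
    rewrite S_INR. pose proof (pos_INR k). lra. }
  assert (HE1 : is_lim_seq (Eseq k phi 1) 0) by exact (proj2 (Hl_lims k phi hphi 1)).
  assert (HE2 : is_lim_seq (Eseq k phi 2) 0) by exact (proj2 (Hl_lims k phi hphi 2)).
  assert (HE3 : is_lim_seq (Eseq k phi 3) 0) by exact (proj2 (Hl_lims k phi hphi 3)).
  assert (HE4 : is_lim_seq (Eseq k phi 4) 0) by exact (proj2 (Hl_lims k phi hphi 4)).
  pose proof lim_u as Hu.
  assert (HV : is_lim_seq (fun n => Vpoly (/ INR n) psi (Eseq k phi 1 n) (Eseq k phi 2 n) (Eseq k phi 3 n) (Eseq k phi 4 n)) (psi * (1 - psi))).
  { eapply lim_eq. unfold Vpoly. lim_tac. ring. }
  assert (HM : is_lim_seq (fun n => M3poly (/ INR n) psi (Eseq k phi 1 n) (Eseq k phi 2 n) (Eseq k phi 3 n) (Eseq k phi 4 n)) (psi * (1 - psi) * (2 * psi - 1))).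
  { eapply lim_eq. unfold M3poly. lim_tac. ring. }
  assert (HK4 : is_lim_seq (fun n => K4poly (/ INR n) psi (Eseq k phi 1 n) (Eseq k phi 2 n) (Eseq k phi 3 n) (Eseq k phi 4 n)) (3 * (psi * (1 - psi)) ^ 2)).
  { eapply lim_eq. unfold K4poly. lim_tac. ring. }
  split; [|split; [|split; [|split]]].
  - intros l. exact (proj1 (Hl_lims k phi hphi l)).
  - unfold asymp_eq.
    apply is_lim_seq_ext_loc with (fun n => ((1 - INR (S k) * / INR n) - psi - (/ INR n) ^ 2 * Eseq k phi 1 n) / ((1 - INR (S k) * / INR n) * (1 - psi))).
    { exists (S (S k)). intros n Hn.
      assert (HN : INR (S k) < INR n) by (apply lt_INR; lia).
      assert (0 < INR (S k)) by (apply lt_0_INR; lia).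
      rewrite mean_id by (auto; lia). rewrite minus_INR by lia. fold psi.
      field. repeat split; lra. }
    eapply lim_eq. lim_tac. replace ((1 - INR (S k) * 0) * (1 - psi)) with (1 - psi) by ring; lra. field. lra.
  - unfold asymp_eq.
    apply is_lim_seq_ext_loc with (fun n => (Vpoly (/ INR n) psi (Eseq k phi 1 n) (Eseq k phi 2 n) (Eseq k phi 3 n) (Eseq k phi 4 n)) / ((1 - INR (S k) * / INR n) * psi * (1 - psi))).
    { exists (S (S k)). intros n Hn.
      assert (HN : INR (S k) < INR n) by (apply lt_INR; lia).
      assert (0 < INR (S k)) by (apply lt_0_INR; lia).
      unfold spillage_var at 1. fold (spillage_var n (S k) phi).
      rewrite var_id by (auto; lia). rewrite minus_INR by lia. fold psi.
      field. repeat split; lra. }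
    eapply lim_eq. lim_tac. replace ((1 - INR (S k) * 0) * psi * (1 - psi)) with (psi * (1 - psi)) by ring.
    apply Rmult_integral_contrapositive; split; lra. field. split; lra.
  - intros Hhalf. unfold asymp_eq.
    destruct (ev_pos _ _ HV) as [N0 HN0]. { apply Rmult_lt_0_compat; lra. }
    apply is_lim_seq_ext_loc with (fun n => (M3poly (/ INR n) psi (Eseq k phi 1 n) (Eseq k phi 2 n) (Eseq k phi 3 n) (Eseq k phi 4 n)) * sqrt ((1 - INR (S k) * / INR n) * psi * (1 - psi)) / (sqrt (Vpoly (/ INR n) psi (Eseq k phi 1 n) (Eseq k phi 2 n) (Eseq k phi 3 n) (Eseq k phi 4 n)) ^ 3 * (2 * (psi - 1 / 2)))).
    { exists (S (S k) + N0)%nat. intros n Hn.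
      assert (HN : INR (S k) < INR n) by (apply lt_INR; lia).
      assert (0 < INR (S k)) by (apply lt_0_INR; lia).
      specialize (HN0 n ltac:(lia)).
      unfold spillage_skew. rewrite cm3_id by (auto; lia). rewrite var_id by (auto; lia).
      fold psi.
      set (Vn := Vpoly (/ INR n) psi (Eseq k phi 1 n) (Eseq k phi 2 n) (Eseq k phi 3 n) (Eseq k phi 4 n)) in *. set (Mn := M3poly (/ INR n) psi (Eseq k phi 1 n) (Eseq k phi 2 n) (Eseq k phi 3 n) (Eseq k phi 4 n)).
      assert (HW : 0 < (1 - INR (S k) * / INR n) * psi * (1 - psi)).
      { apply Rmult_lt_0_compat. apply Rmult_lt_0_compat. 2: lra.
        apply Rlt_Rminus. apply Rmult_lt_reg_r with (INR n). lra.
        rewrite Rmult_assoc, Rinv_l, Rmult_1_l, Rmult_1_r by lra. lra. lra. }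
      set (W := (1 - INR (S k) * / INR n) * psi * (1 - psi)) in *.
      replace (INR (n - S k) * psi * (1 - psi)) with (INR n * W)
        by (unfold W; rewrite minus_INR by lia; field; lra).
      rewrite !sqrt_mult_alt by lra.
      assert (Hs : sqrt (INR n) * sqrt (INR n) = INR n) by (apply sqrt_sqrt; lra).
      assert (0 < sqrt (INR n)) by (apply sqrt_lt_R0; lra).
      assert (0 < sqrt Vn) by (apply sqrt_lt_R0; lra).
      assert (0 < sqrt W) by (apply sqrt_lt_R0; lra).
      set (s := sqrt (INR n)) in *. rewrite <- Hs at 1.
      field. repeat split; try lra. }
    assert (Hpq : 0 < psi * (1 - psi)) by (apply Rmult_lt_0_compat; lra).
    assert (Hsq : 0 < sqrt (psi * (1 - psi))) by (apply sqrt_lt_R0; lra).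
    assert (Hsq2 : sqrt (psi * (1 - psi)) * sqrt (psi * (1 - psi)) = psi * (1 - psi)) by (apply sqrt_sqrt; lra).
    eapply lim_eq. lim_tac.
    + replace ((1 - INR (S k) * 0) * psi * (1 - psi)) with (psi * (1 - psi)) by ring. lra.
    + lra.
    + apply Rmult_integral_contrapositive; split. apply pow_nonzero; lra. lra.
    + replace ((1 - INR (S k) * 0) * psi * (1 - psi)) with (psi * (1 - psi)) by ring.
      set (q := sqrt (psi * (1 - psi))) in *. rewrite <- Hsq2. field. split. lra. intro Hc. apply Hhalf. lra.
  - unfold asymp_eq.
    destruct (ev_pos _ _ HV) as [N0 HN0]. { apply Rmult_lt_0_compat; lra. }
    apply is_lim_seq_ext_loc with (fun n => ((K4poly (/ INR n) psi (Eseq k phi 1 n) (Eseq k phi 2 n) (Eseq k phi 3 n) (Eseq k phi 4 n)) / (Vpoly (/ INR n) psi (Eseq k phi 1 n) (Eseq k phi 2 n) (Eseq k phi 3 n) (Eseq k phi 4 n)) ^ 2) / (3 + / INR n * (1 - 6 * psi * (1 - psi)) / ((1 - INR (S k) * / INR n) * psi * (1 - psi)))).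
    { exists (S (S k) + N0)%nat. intros n Hn.
      assert (HN : INR (S k) < INR n) by (apply lt_INR; lia).
      assert (0 < INR (S k)) by (apply lt_0_INR; lia).
      specialize (HN0 n ltac:(lia)).
      unfold spillage_kurt. rewrite cm4_id by (auto; lia). rewrite var_id by (auto; lia).
      fold psi. rewrite minus_INR by lia.
      field. repeat split; try lra.
      assert (HN1 : INR (S k) + 1 <= INR n) by (rewrite <- S_INR; apply le_INR; lia).
      assert (Hq : psi * (1 - psi) <= 1 / 4) by (pose proof (pow2_ge_0 (psi - 1 / 2)); nra).
      assert (0 < psi * (1 - psi)) by (apply Rmult_lt_0_compat; lra).
      assert (HD : 0 <= (INR n - INR (S k) - 1) * (psi * (1 - psi))) by (apply Rmult_le_pos; lra). nra. }
    assert (Hpq : 0 < psi * (1 - psi)) by (apply Rmult_lt_0_compat; lra).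
    eapply lim_eq. lim_tac. all: try (replace ((1 - INR (S k) * 0) * psi * (1 - psi)) with (psi * (1 - psi)) by ring).
    + apply pow_nonzero; lra.
    + lra.
    + unfold Rdiv. rewrite !Rmult_0_l, Rplus_0_r. lra.
    + field. lra.
Qed.
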